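(* Let $G$ be a bridged graph. Then $G$ is nicely bridged if any of the following holds: (a) $G$ is chordal; (b) $G$ does not contain a 3-sun as an induced subgraph; (c) every induced wheel of $G$ is uniquely centered; (d) $G$ contains no clique of size four.
   Context: A subgraph is isometric if its distances equal those of $G$; $G$ is bridged if it has no isometric cycle of length greater than three. A graph is chordal if it has no induced cycle of length greater than three. A set $K$ of vertices is convex if it contains all vertices on all shortest paths in $G$ between any two of its vertices. A graph is 2-self-centered if every vertex has eccentricity exactly 2. $G$ is nicely bridged if it is bridged and every 2-self-centered subgraph $G[S]$ induced by a convex set $S$ is chordal. The 3-sun is the graph on vertices $u,v,w,x,y,z$ where $\{x,y,z\}$ is a triangle and $u$ is adjacent to $y,z$, $v$ to $x,z$, $w$ to $x,y$ (i.e. a triangle $u,v,w$ with each edge subdivided and the three subdivision vertices joined into a clique). An induced wheel is a set $C\cup\{x\}$ where $C$ induces a cycle of length $k>3$ and $x\notin C$ is adjacent to every vertex of $C$; it is uniquely centered if there is no vertex $y\ne x$ such that $C\cup\{y\}$ is also an induced wheel. *)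

(* Defs.v *)
(* finite simple graphs as symmetric irreflexive relations
   e : rel T on a finType T. *)
From mathcomp Require Import all_boot.
Set Implicit Arguments. Unset Strict Implicit. Unset Printing Implicit Defensive.

Section Graphs.
Variable T : finType.
Implicit Types (e : rel T) (S : {set T}).

Definition walk e (x y : T) (n : nat) : Prop :=
  exists p : seq T, [/\ path e x p, last x p = y & size p = n].

(* d(x,y) = n (no such n if x, y lie in different components) *)
Definition is_dist e (x y : T) (n : nat) : Prop :=
  walk e x y n /\ forall m, m < n -> ~ walk e x y m.

(* the induced subgraph G[S], as a relation on T whose edges lie inside S *)
Definition induced e S : rel T := [rel a b | [&& a \in S, b \in S & e a b]].

Definition cyc_adj (k i j : nat) : bool :=
  (j == i.+1 %% k) || (i == j.+1 %% k).
Definition cyc_dist (k i j : nat) : nat :=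
  let d := (i - j) + (j - i) in minn d (k - d).

Definition is_cycle e (k : nat) (v : 'I_k -> T) : Prop :=
  injective v /\ forall i j : 'I_k, cyc_adj k i j -> e (v i) (v j).

Definition isometric_cycle e (k : nat) (v : 'I_k -> T) : Prop :=
  is_cycle e v /\ forall i j : 'I_k, is_dist e (v i) (v j) (cyc_dist k i j).

Definition induced_cycle e (k : nat) (v : 'I_k -> T) : Prop :=
  injective v /\ forall i j : 'I_k, e (v i) (v j) = cyc_adj k i j.

Definition bridged e : Prop :=
  forall (k : nat) (v : 'I_k -> T), 3 < k -> ~ isometric_cycle e v.

Definition chordal e : Prop :=
  forall (k : nat) (v : 'I_k -> T), 3 < k -> ~ induced_cycle e v.

Definition convex e S : Prop :=
  forall (x y z : T) (p : seq T), x \in S -> y \in S ->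
    path e x p -> last x p = y -> is_dist e x y (size p) ->
    z \in x :: p -> z \in S.

(* the graph with vertex set S and edge relation f is 2-self-centered:
   every vertex has eccentricity exactly 2 *)
Definition two_self_centered (f : rel T) S : Prop :=
  forall x, x \in S ->
    (forall y, y \in S -> exists2 n, n <= 2 & is_dist f x y n) /\
    (exists2 y, y \in S & is_dist f x y 2).

Definition nicely_bridged e : Prop :=
  bridged e /\
  forall S, convex e S -> two_self_centered (induced e S) S ->
    chordal (induced e S).

Definition induced_3sun e (u v w x y z : T) : Prop :=
  uniq [:: u; v; w; x; y; z] /\
  [/\ e x y, e y z & e x z] /\
  [/\ e u y, e u z, e v x, e v z & e w x] /\ e w y /\
  [/\ ~~ e u v, ~~ e u w & ~~ e v w] /\
  [/\ ~~ e u x, ~~ e v y & ~~ e w z].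

Definition has_induced_3sun e : Prop :=
  exists u v w x y z, induced_3sun e u v w x y z.

Definition induced_wheel e (k : nat) (v : 'I_k -> T) (x : T) : Prop :=
  3 < k /\ induced_cycle e v /\
  (forall i, v i != x) /\ (forall i, e x (v i)).

Definition uniquely_centered e (k : nat) (v : 'I_k -> T) (x : T) : Prop :=
  ~ exists y, y <> x /\ induced_wheel e v y.

Definition wheels_uniquely_centered e : Prop :=
  forall (k : nat) (v : 'I_k -> T) (x : T),
    induced_wheel e v x -> uniquely_centered e v x.

Definition has_K4 e : Prop :=
  exists a b c d : T, uniq [:: a; b; c; d] /\
    [/\ e a b, e a c & e a d] /\ [/\ e b c, e b d & e c d].

End Graphs.

(* Main.v *)
Require Import Defs.
From mathcomp Require Import all_boot zify.
From Stdlib Require Import Classical_Prop.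
Set Implicit Arguments. Unset Strict Implicit. Unset Printing Implicit Defensive.

Section Basics.
Variables (T : finType) (e : rel T).
Hypotheses (e_sym : symmetric e) (e_irr : irreflexive e).

Lemma edge_neq x y : e x y -> x != y.
Proof. by apply: contraTneq => ->; rewrite e_irr. Qed.

Lemma dist0 x : is_dist e x x 0.
Proof. by split; [exists [::] | ]. Qed.

Lemma dist1 x y : e x y -> is_dist e x y 1.
Proof.
move=> Exy; split; first by exists [:: y]; rewrite /= Exy.
case=> // _ [p [_ Hl Hs]]; case: p Hl Hs => //= Hxy _.
by rewrite Hxy e_irr in Exy.
Qed.

Lemma dist2 m x y : x != y -> ~~ e x y -> e x m -> e m y -> is_dist e x y 2.
Proof.
move=> Nxy NExy Exm Emy; split; first by exists [:: m; y]; rewrite /= Exm Emy.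
case=> [|[|//]] _ [p [Hp Hl Hs]].
- by case: p Hp Hl Hs => //= _ Hxy; rewrite Hxy eqxx in Nxy.
- case: p Hp Hl Hs => [|z [|//]] //= /andP [Hz _] Hzy _.
  by rewrite -Hzy Hz in NExy.
Qed.

Hypothesis hbr : bridged e.

Ltac solve_e := solve [ by [] | by rewrite e_irr | assumption | rewrite e_sym; assumption
   | apply/negbTE; assumption | rewrite e_sym; apply/negbTE; assumption
   | rewrite eq_sym; assumption
   | apply/negbT; assumption | rewrite e_sym; apply/negbT; assumption ].

Lemma noC4 a b c d : e a b -> e b c -> e c d -> e d a -> ~~ e a c -> ~~ e b d ->
  a != c -> b != d -> False.
Proof.
move=> Hab Hbc Hcd Hda Nac Nbd Dac Dbd.
have Dab := edge_neq Hab; have Dbc := edge_neq Hbc; have Dcd := edge_neq Hcd;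
have Dda := edge_neq Hda.
pose v := fun i : 'I_4 => nth a [:: a; b; c; d] i.
apply: (@hbr 4 v) => //; split; first split.
- move=> [i Hi] [j Hj]; rewrite /v /=.
  case: i Hi => [|[|[|[|i]]]] Hi; case: j Hj => [|[|[|[|j]]]] Hj //= Heq;
   try (by apply: val_inj);
   subst; rewrite ?eqxx // eq_sym ?eqxx // in Dab Dbc Dcd Dda Dac Dbd.
- move=> [i Hi] [j Hj]; rewrite /v.
  case: i Hi => [|[|[|[|i]]]] Hi; case: j Hj => [|[|[|[|j]]]] Hj //=;
  match goal with |- is_true (cyc_adj ?k ?i ?j) -> _ =>
    let n := eval vm_compute in (cyc_adj k i j) in change (cyc_adj k i j) with n end;
  move=> // _; solve_e.
- move=> [i Hi] [j Hj]; rewrite /v.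
  case: i Hi => [|[|[|[|i]]]] Hi; case: j Hj => [|[|[|[|j]]]] Hj //=;
  match goal with |- is_dist _ _ _ (cyc_dist ?k ?i ?j) =>
    let n := eval vm_compute in (cyc_dist k i j) in change (cyc_dist k i j) with n end;
  solve [ apply: dist0 | apply: dist1; solve_e
        | apply: (@dist2 a); solve_e | apply: (@dist2 b); solve_e
        | apply: (@dist2 c); solve_e | apply: (@dist2 d); solve_e ].
Qed.

Lemma noC5 a b c d f : e a b -> e b c -> e c d -> e d f -> e f a ->
  ~~ e a c -> ~~ e a d -> ~~ e b d -> ~~ e b f -> ~~ e c f ->
  a != c -> a != d -> b != d -> b != f -> c != f -> False.
Proof.
move=> Hab Hbc Hcd Hdf Hfa Nac Nad Nbd Nbf Ncf Dac Dad Dbd Dbf Dcf.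
have Dab := edge_neq Hab; have Dbc := edge_neq Hbc; have Dcd := edge_neq Hcd;
have Ddf := edge_neq Hdf; have Dfa := edge_neq Hfa.
pose v := fun i : 'I_5 => nth a [:: a; b; c; d; f] i.
apply: (@hbr 5 v) => //; split; first split.
- move=> [i Hi] [j Hj]; rewrite /v /=.
  case: i Hi => [|[|[|[|[|i]]]]] Hi; case: j Hj => [|[|[|[|[|j]]]]] Hj //= Heq;
   try (by apply: val_inj);
   subst; rewrite ?eqxx // eq_sym ?eqxx // in Dab Dbc Dcd Ddf Dfa Dac Dad Dbd Dbf Dcf.
- move=> [i Hi] [j Hj]; rewrite /v.
  case: i Hi => [|[|[|[|[|i]]]]] Hi; case: j Hj => [|[|[|[|[|j]]]]] Hj //=;
  match goal with |- is_true (cyc_adj ?k ?i ?j) -> _ =>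
    let n := eval vm_compute in (cyc_adj k i j) in change (cyc_adj k i j) with n end;
  move=> // _; solve_e.
- move=> [i Hi] [j Hj]; rewrite /v.
  case: i Hi => [|[|[|[|[|i]]]]] Hi; case: j Hj => [|[|[|[|[|j]]]]] Hj //=;
  match goal with |- is_dist _ _ _ (cyc_dist ?k ?i ?j) =>
    let n := eval vm_compute in (cyc_dist k i j) in change (cyc_dist k i j) with n end;
  solve [ apply: dist0 | apply: dist1; solve_e
        | apply: (@dist2 a); solve_e | apply: (@dist2 b); solve_e
        | apply: (@dist2 c); solve_e | apply: (@dist2 d); solve_e
        | apply: (@dist2 f); solve_e ].
Qed.


Lemma c4_chord a b c d : e a b -> e b c -> e c d -> e d a -> ~~ e a c ->
  a != c -> b != d -> e b d.
Proof.
move=> Hab Hbc Hcd Hda Nac Dac Dbd; apply/negPn/negP => Nbd.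
exact: (noC4 Hab Hbc Hcd Hda Nac Nbd Dac Dbd).
Qed.

Lemma neq_by u x y : e x u -> ~~ e y u -> x != y.
Proof. by move=> H1; apply: contraNneq => <-. Qed.

Lemma mk_sun u v w x y z :
  e x y -> e y z -> e x z -> e u y -> e u z -> e v x -> e v z -> e w x -> e w y ->
  ~~ e u v -> ~~ e u w -> ~~ e v w -> ~~ e u x -> ~~ e v y -> ~~ e w z ->
  has_induced_3sun e.
Proof.
move=> xy yz xz uy uz vx vz wx wy Nuv Nuw Nvw Nux Nvy Nwz.
exists u, v, w, x, y, z; split; last by do !split.
have ne := edge_neq.
rewrite /= !inE !negb_or.
have D1 : u != v by apply: (@neq_by y); rewrite // e_sym.
have D2 : u != w by apply: (@neq_by z); rewrite // e_sym.
have D3 : v != w by apply: (@neq_by z); rewrite // e_sym.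
have D4 : u != x by rewrite eq_sym; apply: (@neq_by v); rewrite // e_sym.
have D5 : u != y by apply: ne.
have D6 : u != z by apply: ne.
have D7 : v != x by apply: ne.
have D8 : v != y by rewrite eq_sym; apply: (@neq_by u); rewrite // e_sym.
have D9 : v != z by apply: ne.
have D10 : w != x by apply: ne.
have D11 : w != y by apply: ne.
have D12 : w != z by rewrite eq_sym; apply: (@neq_by u); rewrite // e_sym.
have D13 : x != y by apply: ne.
have D14 : y != z by apply: ne.
have D15 : x != z by apply: ne.
by rewrite D1 D2 D3 D4 D5 D6 D7 D8 D9 D10 D11 D12 D13 D14 D15.
Qed.

Lemma nb_conv c x y t : (x == c) || e x c -> (y == c) || e y c -> x != y -> ~~ e x y ->
  e x t -> e t y -> (t == c) || e t c.
Proof.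
case/orP=> [/eqP -> _ _ _ Hct _|Hxc]; first by rewrite e_sym Hct orbT.
case/orP=> [/eqP -> _ _ _ Htc|Hyc Dxy Nxy Hxt Hty]; first by rewrite Htc orbT.
case: (t =P c) => //= Dtc; apply/negPn/negP => Ntc.
apply: (noC4 (a:=c) (b:=x) (c:=t) (d:=y)); rewrite // ?(e_sym c) //.
by apply/eqP => Hc; apply: Dtc.
Qed.

Variable S : {set T}.
Hypothesis h2sc : two_self_centered (induced e S) S.

Lemma CN x y : x \in S -> y \in S -> x != y -> ~~ e x y ->
  exists2 m, m \in S & e x m && e m y.
Proof.
move=> xS yS Dxy Nxy; have [Hall _] := h2sc xS.
have [n Hn [[p [Hp Hl Hs]] _]] := Hall y yS.
rewrite -Hs {Hs} in Hn.
case: p Hp Hl Hn => [|a [|b [|//]]] /=.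
- by move=> _ Hxy; rewrite Hxy eqxx in Dxy.
- by move=> /andP [/and3P [_ _ Hxa] _] Hay; rewrite -Hay Hxa in Nxy.
- move=> /and3P [/and3P [_ aS Hxa] /and3P [_ _ Hab] _] Hby _.
  by exists a => //; rewrite Hxa -Hby Hab.
Qed.

Lemma far x : x \in S -> exists2 y, y \in S & (x != y) && ~~ e x y.
Proof.
move=> xS; have [_ [y yS [_ Hmin]]] := h2sc xS; exists y => //.
apply/andP; split.
- apply/eqP => Hxy; apply: (Hmin 0) => //; exists [::]; by split.
- apply/negP => Hxy; apply: (Hmin 1) => //; exists [:: y]; split => //=.
  by rewrite andbT; apply/and3P.
Qed.

Lemma TC u y z : u \in S -> y \in S -> z \in S -> u != y -> u != z ->
  ~~ e u y -> ~~ e u z -> e y z ->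
  exists2 x, x \in S & [&& e x u, e x y & e x z].
Proof.
move=> uS yS zS Duy Duz Nuy Nuz Eyz.
have [a aS /andP [Eua Eay]] := CN uS yS Duy Nuy.
have [b bS /andP [Eub Ebz]] := CN uS zS Duz Nuz.
case Eaz: (e a z); first by exists a => //; rewrite (e_sym a u) Eua Eay.
case Eby: (e b y); first by exists b => //; rewrite (e_sym b u) Eub Eby Ebz.
have Dab : a != b by apply: contraFneq Eaz => ->.
have Daz : a != z by apply: contraNneq Nuz => <-.
have Dyb : y != b by apply: contraNneq Nuy => ->.
case Eab: (e a b).
- exfalso; apply: (noC4 (a:=a) (b:=y) (c:=z) (d:=b)) => //.
  + by rewrite e_sym.
  + by rewrite e_sym.
  + by rewrite Eaz.
  + by rewrite e_sym Eby.
- exfalso; apply: (noC5 (a:=u) (b:=a) (c:=y) (d:=z) (f:=b)) => //.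
  + by rewrite e_sym.
  + by rewrite e_sym.
  + by rewrite Eaz.
  + by rewrite Eab.
  + by rewrite e_sym Eby.
Qed.

Definition inN (t a : T) := (t == a) || e t a.

Lemma sun s0 : s0 \in S -> has_induced_3sun e.
Proof.
move=> s0S.
pose P := fun A : {set T} => (A \subset S) && [forall t in S, [exists a in A, ~~ inN t a]].
have PS : P S.
  rewrite /P subxx /=; apply/forall_inP => t tS.
  have [y yS /andP [D N]] := far tS.
  by apply/exists_inP; exists y => //; rewrite /inN negb_or D N.
case: (@arg_minnP _ S P (fun A => #|A|) PS) => A /andP [AS /forall_inP HA] Hmin.
have AinS a : a \in A -> a \in S by move=> aA; apply: (subsetP AS).
have notall t : t \in S -> (forall a, a \in A -> inN t a) -> False.
  move=> tS Ht; have /exists_inP [a aA] := HA t tS; by rewrite Ht.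
have small a : a \in A -> exists2 p, p \in S &
    ~~ inN p a /\ forall b, b \in A -> b != a -> inN p b.
  move=> aA.
  have NP : ~~ P (A :\ a).
    apply/negP => PB; have := Hmin _ PB.
    by rewrite [X in X <= _](cardsD1 a A) aA add1n ltnn.
  move: NP; rewrite /P (subset_trans (subsetDl A [set a]) AS) /=.
  case/forall_inPn => t tS /exists_inPn Ht.
  exists t => //; split.
  - have /exists_inP [b bA Hb] := HA t tS.
    case: (b =P a) => [<- //|/eqP Dba].
    by move: (Ht b); rewrite !inE Dba bA Hb => /(_ isT).
  - by move=> b bA Dba; move: (Ht b); rewrite !inE Dba bA => /(_ isT) /negPn.
have nonadj a b : a \in A -> b \in A -> a != b -> ~~ e a b.
  move=> aA bA Dab; apply/negP => Eab.
  have [pa paS [Npa Hpa]] := small a aA.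
  have [pb pbS [Npb Hpb]] := small b bA.
  move: Npa Npb; rewrite /inN !negb_or => /andP [Dpa Npa] /andP [Dpb Npb].
  have Ipab : inN pa b by apply: Hpa; rewrite // eq_sym.
  have Ipba := Hpb a aA Dab.
  have Epab : e pa b.
    case/orP: Ipab => // /eqP E; by rewrite E e_sym Eab in Npa.
  have Epba : e pb a.
    case/orP: Ipba => // /eqP E; by rewrite E Eab in Npb.
  have Nab : ~~ e pa pb.
    apply/negP => E; apply: (noC4 (a:=pa) (b:=b) (c:=a) (d:=pb)); solve_e.
  have Dab' : pa != pb by apply: (@neq_by b).
  have [t tS /andP [Ept Etp]] := CN paS pbS Dab' Nab.
  have Dtb : t != b by apply: (@neq_by pb); solve_e.
  have Dta : t != a by apply: (@neq_by pa); solve_e.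
  apply: (notall t tS) => c cA.
  case: (c =P a) => [->|/eqP Dca]; last case: (c =P b) => [->|/eqP Dcb].
  - rewrite /inN; case Eta: (e t a); first by rewrite orbT.
    case Etb: (e t b).
    + exfalso; apply: (noC4 (a:=t) (b:=b) (c:=a) (d:=pb)); rewrite ?Eta; solve_e.
    + exfalso; apply: (noC5 (a:=pa) (b:=b) (c:=a) (d:=pb) (f:=t)); rewrite ?(e_sym b t) ?(e_sym a t) ?Eta ?Etb; solve_e.
  - rewrite /inN; case Etb: (e t b); first by rewrite orbT.
    case Eta: (e t a).
    + exfalso; apply: (noC4 (a:=t) (b:=a) (c:=b) (d:=pa)); rewrite ?Etb; solve_e.
    + exfalso; apply: (noC5 (a:=pa) (b:=b) (c:=a) (d:=pb) (f:=t)); rewrite ?(e_sym b t) ?(e_sym a t) ?Eta ?Etb; solve_e.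
  - exact: (nb_conv (Hpa c cA Dca) (Hpb c cA Dcb) Dab' Nab Ept Etp).
have [a1 a1A _] := exists_inP (HA s0 s0S).
have a1S := AinS a1 a1A.
have [a2 a2A] := exists_inP (HA a1 a1S).
rewrite /inN negb_or => /andP [D12 _]; have a2S := AinS a2 a2A.
have N12 := nonadj a1 a2 a1A a2A D12.
have [m mS /andP [Em1 Em2]] := CN a1S a2S D12 N12.
have [a3 a3A] := exists_inP (HA m mS).
rewrite /inN negb_or => /andP [Dm3 Nm3]; have a3S := AinS a3 a3A.
have D13 : a1 != a3 by apply: (@neq_by m); solve_e.
have D23 : a2 != a3 by apply: (@neq_by m); solve_e.
have N13 := nonadj a1 a3 a1A a3A D13.
have N23 := nonadj a2 a3 a2A a3A D23.
have toE p b c : c \in A -> b \in A -> b != c -> inN p b -> inN p c -> e p b.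
  move=> cA bA Dbc; case/orP => [/eqP ->|//]; case/orP => [/eqP E|E].
  - by rewrite E eqxx in Dbc.
  - by rewrite (negbTE (nonadj _ _ bA cA Dbc)) in E.
have [p1 p1S [Np1 Hp1]] := small a1 a1A.
have [p2 p2S [Np2 Hp2]] := small a2 a2A.
have [p3 p3S [Np3 Hp3]] := small a3 a3A.
move: Np1 Np2 Np3; rewrite /inN !negb_or => /andP [Dp1 Np1] /andP [Dp2 Np2] /andP [Dp3 Np3].
have D21 : a2 != a1 by rewrite eq_sym.
have D31 : a3 != a1 by rewrite eq_sym.
have D32 : a3 != a2 by rewrite eq_sym.
have E12 : e p1 a2 by apply: (toE _ _ a3) => //; apply: Hp1.
have E13 : e p1 a3 by apply: (toE _ _ a2) => //; apply: Hp1.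
have E21 : e p2 a1 by apply: (toE _ _ a3) => //; apply: Hp2.
have E23 : e p2 a3 by apply: (toE _ _ a1) => //; apply: Hp2.
have E31 : e p3 a1 by apply: (toE _ _ a2) => //; apply: Hp3.
have E32 : e p3 a2 by apply: (toE _ _ a1) => //; apply: Hp3.
case: (pickP (fun a => [&& a \in A, a != a1, a != a2 & a != a3])) =>
   [a4 /and4P [a4A D41 D42 D43] | Hno].
- have E14 : e p1 a4 by apply: (toE _ _ a2) => //; apply: Hp1; rewrite // eq_sym.
  have E24 : e p2 a4 by apply: (toE _ _ a1) => //; apply: Hp2; rewrite // eq_sym.
  have E34 : e p3 a4 by apply: (toE _ _ a1) => //; apply: Hp3; rewrite // eq_sym.
  have N14 : ~~ e a1 a4 by apply: nonadj; rewrite // eq_sym.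
  have N24 : ~~ e a2 a4 by apply: nonadj; rewrite // eq_sym.
  have N34 : ~~ e a3 a4 by apply: nonadj; rewrite // eq_sym.
  have P12 : e p1 p2.
    apply: (@c4_chord a3 _ a4); try solve_e.
    by apply: (@neq_by a2); solve_e.
  have P23 : e p2 p3.
    apply: (@c4_chord a1 _ a4); try solve_e.
    by apply: (@neq_by a3); solve_e.
  have P13 : e p1 p3.
    apply: (@c4_chord a2 _ a4); try solve_e.
    by apply: (@neq_by a3); solve_e.
  by apply: (@mk_sun a1 a2 a3 p1 p2 p3); solve_e.
- have notall3 t : t \in S -> inN t a1 -> inN t a2 -> inN t a3 -> False.
    move=> tS I1 I2 I3; apply: (notall t tS) => c cA.
    case: (c =P a1) => [->//|/eqP Dc1]; case: (c =P a2) => [->//|/eqP Dc2].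
    case: (c =P a3) => [->//|/eqP Dc3].
    by move: (Hno c); rewrite cA Dc1 Dc2 Dc3.
  have inE1 x y : e x y -> inN x y by move=> h; rewrite /inN h orbT.
  have [a' a'S /andP [E2a Ea3]] := CN a2S a3S D23 N23.
  have Na1 : ~~ inN a' a1.
    apply/negP => I; apply: (notall3 a') => //; apply: inE1; solve_e.
  move: Na1; rewrite /inN negb_or => /andP [Da1 Na1].
  have [b' b'S /and3P [Eb1 Eba Eb3]] : exists2 x, x \in S & [&& e x a1, e x a' & e x a3].
    apply: TC => //; solve_e.
  have Nb2 : ~~ inN b' a2.
    apply/negP => I; apply: (notall3 b') => //; apply: inE1; solve_e.
  move: Nb2; rewrite /inN negb_or => /andP [Db2 Nb2].
  have [c' c'S /and3P [Ec1 Eca Ec2]] : exists2 x, x \in S & [&& e x a1, e x a' & e x a2].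
    apply: TC => //; solve_e.
  have Nc3 : ~~ inN c' a3.
    apply/negP => I; apply: (notall3 c') => //; apply: inE1; solve_e.
  move: Nc3; rewrite /inN negb_or => /andP [Dc3 Nc3].
  have Ebc : e b' c'.
    apply: (@c4_chord a1 _ a'); try solve_e.
    by apply: (@neq_by a3); solve_e.
  by apply: (@mk_sun a1 a2 a3 a' b' c'); solve_e.
Qed.

Lemma cyc_adjE n i j : 0 < n -> i < n -> j < n ->
  cyc_adj n i j = [|| j == i.+1, i == j.+1, (i == n.-1) && (j == 0) | (j == n.-1) && (i == 0)].
Proof.
move=> n0 hi hj; rewrite /cyc_adj.
have mS a : a < n -> a.+1 %% n = (if a.+1 == n then 0 else a.+1).
  move=> ha; case: eqP => [->|h]; first by rewrite modnn.
  by rewrite modn_small //; lia.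
rewrite (mS i hi) (mS j hj).
case: (i.+1 =P n) => h1; case: (j.+1 =P n) => h2; lia.
Qed.

Section Cyc.
Variables (k : nat) (v : 'I_k -> T).
Hypotheses (k6 : 5 < k) (vS : forall i, v i \in S) (vinj : injective v)
  (vadj : forall i j, e (v i) (v j) = cyc_adj k i j).
Hypothesis vmin : forall n (w : 'I_n -> T), 3 < n -> n < k -> ~ induced_cycle (induced e S) w.

Lemma kpos : 0 < k. Proof. exact: leq_trans k6. Qed.
Definition cc (n : nat) : T := v (Ordinal (ltn_pmod n kpos)).

Lemma ccS n : cc n \in S. Proof. exact: vS. Qed.

Lemma cc_eq a b : (cc a == cc b) = (a %% k == b %% k).
Proof. by rewrite (inj_eq vinj). Qed.

Lemma off_eq x a b : a < k -> b < k -> (cc (x + a) == cc (x + b)) = (a == b).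
Proof. by move=> ha hb; rewrite cc_eq eqn_modDl !modn_small. Qed.

Lemma off_adj x a b : a < k -> b < k -> e (cc (x + a)) (cc (x + b)) =
  [|| b == a.+1, a == b.+1, (a == k.-1) && (b == 0) | (b == k.-1) && (a == 0)].
Proof.
move=> ha hb; rewrite /cc vadj /= /cyc_adj.
have mm c : (c %% k).+1 %% k = c.+1 %% k by rewrite -addn1 modnDml addn1.
rewrite !mm -!addnS !eqn_modDl.
have mS c : c < k -> c.+1 %% k = (if c.+1 == k then 0 else c.+1).
  move=> hc; case: eqP => [->|h]; first by rewrite modnn.
  by rewrite modn_small //; lia.
rewrite (mS a ha) (mS b hb) !modn_small //.
case: (a.+1 =P k) => h1; case: (b.+1 =P k) => h2; lia.
Qed.


Lemma fan_false b n m : 3 < n -> n < k -> m \in S -> (forall i, m != cc i) ->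
  e m (cc (b + 1)) -> e m (cc (b + n.-1)) ->
  (forall i, 1 < i < n.-1 -> ~~ e m (cc (b + i))) -> False.
Proof.
move=> n3 nk mS mC E1 En Emid.
pose w := fun i : 'I_n => if val i == 0 then m else cc (b + i).
apply: (@vmin n w n3 nk); split.
- move=> [i hi] [j hj]; rewrite /w /= => H; apply: val_inj => /=.
  move: H; case: (i =P 0) => [->|/eqP i0]; case: (j =P 0) => [->|/eqP j0] //=.
  + by move=> H; move: (mC (b + j)); rewrite H eqxx.
  + by move=> H; move: (mC (b + i)); rewrite H eqxx.
  + move/eqP; rewrite off_eq; [by move/eqP | lia | lia].
- move=> [i hi] [j hj]; rewrite /induced /= /w /=.
  rewrite cyc_adjE //=; last lia.
  case: (i =P 0) => [Ei|/eqP i0]; case: (j =P 0) => [Ej|/eqP j0] /=.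
  + by rewrite mS e_irr /=; lia.
  + rewrite mS ccS /=.
    case: (j =P 1) => [Ej1|j1]; first by rewrite Ej1 E1; lia.
    case: (j =P n.-1) => [Ejn|jn]; first by rewrite Ejn En; lia.
    rewrite (negbTE (Emid j _)); lia.
  + rewrite mS ccS /= e_sym.
    case: (i =P 1) => [Ei1|i1]; first by rewrite Ei1 E1; lia.
    case: (i =P n.-1) => [Ein|iN]; first by rewrite Ein En; lia.
    rewrite (negbTE (Emid i _)); lia.
  + by rewrite !ccS off_adj /=; lia.
Qed.

Lemma cc_off x i : exists2 a, a < k & cc i = cc (x + a).
Proof.
exists ((i + k - x %% k) %% k); first exact: ltn_pmod kpos.
apply/eqP; rewrite cc_eq modnDmr {1}(divn_eq x k) -addnA.
have -> : x %% k + (i + k - x %% k) = i + k by have := ltn_pmod x kpos; lia.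
by rewrite modnMDl modnDr.
Qed.

Lemma ccK x : cc (x + k) = cc x.
Proof. by apply/eqP; rewrite cc_eq modnDr. Qed.

Lemma cc0 x : cc x = cc (x + 0). Proof. by rewrite addn0. Qed.

Lemma rim_not x m : e m (cc x) -> e m (cc (x + 3)) -> forall i, m != cc i.
Proof.
move=> E0 E3 i; apply/eqP => Hm.
have [a ha Ha] := cc_off x i; move: E0 E3; rewrite Hm Ha [cc x]cc0.
rewrite !off_adj; try lia.
Qed.

Lemma a01 x : e (cc (x + 0)) (cc (x + 1)). Proof. rewrite off_adj; lia. Qed.
Lemma a12 x : e (cc (x + 1)) (cc (x + 2)). Proof. rewrite off_adj; lia. Qed.
Lemma a23 x : e (cc (x + 2)) (cc (x + 3)). Proof. rewrite off_adj; lia. Qed.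
Lemma n02 x : ~~ e (cc (x + 0)) (cc (x + 2)). Proof. rewrite off_adj; lia. Qed.
Lemma n03 x : ~~ e (cc (x + 0)) (cc (x + 3)). Proof. rewrite off_adj; lia. Qed.
Lemma n13 x : ~~ e (cc (x + 1)) (cc (x + 3)). Proof. rewrite off_adj; lia. Qed.
Lemma d02 x : cc (x + 0) != cc (x + 2). Proof. rewrite off_eq; lia. Qed.
Lemma d03 x : cc (x + 0) != cc (x + 3). Proof. rewrite off_eq; lia. Qed.
Lemma d13 x : cc (x + 1) != cc (x + 3). Proof. rewrite off_eq; lia. Qed.

Ltac ccf := first [ exact: a01 | exact: a12 | exact: a23 | exact: n02 | exact: n03
  | exact: n13 | exact: d02 | exact: d03 | exact: d13 ].
Ltac nlia := repeat match goal with
  | H : context [e _ _] |- _ => clear H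
  | H : context [_ \in S] |- _ => clear H
  | H : forall _, _ |- _ => clear H end; lia.
Ltac cs := solve [ solve_e | ccf | (rewrite e_sym; ccf) | (rewrite eq_sym; ccf) ].

Lemma hub x m : m \in S -> e m (cc x) -> e m (cc (x + 3)) -> forall i, e m (cc i).
Proof.
move=> mS E0 E3.
have mC := rim_not E0 E3.
rewrite [cc x]cc0 in E0.
have [E1 E2] : e m (cc (x + 1)) /\ e m (cc (x + 2)).
  case E1: (e m (cc (x + 1))); case E2: (e m (cc (x + 2))) => //; exfalso.
  - apply: (noC4 (a:=m) (b:=cc (x+1)) (c:=cc (x+2)) (d:=cc (x+3))); rewrite ?E2; cs.
  - apply: (noC4 (a:=m) (b:=cc (x+0)) (c:=cc (x+1)) (d:=cc (x+2))); rewrite ?E1; cs.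
  - apply: (noC5 (a:=m) (b:=cc (x+0)) (c:=cc (x+1)) (d:=cc (x+2)) (f:=cc (x+3)));
      rewrite ?E1 ?E2; cs.
suff H : forall t, t < k -> e m (cc (x + t)).
  by move=> i; have [a ha ->] := cc_off x i; exact: H.
move=> t tk; apply/negPn/negP => Nt.
have exP : exists t, (t < k) && ~~ e m (cc (x + t)) by exists t; rewrite tk Nt.
case: (ex_minnP exP) => j /andP [jk Nj] jmin.
have j4 : 3 < j.
  case: j jk Nj jmin => [|[|[|[|j]]]] //; by rewrite ?E0 ?E1 ?E2 ?E3.
have below s : s < j -> e m (cc (x + s)).
  move=> sj; apply/negPn/negP => Ns.
  have := jmin s; rewrite Ns andbT => /(_ (ltn_trans sj jk)); nlia.
have exQ : exists s, [&& j < s, s <= k & e m (cc (x + s))].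
  by exists k; rewrite jk leqnn ccK [cc x]cc0 E0.
case: (ex_minnP exQ) => l /and3P [jl lk El] lmin.
have mid s : j <= s < l -> ~~ e m (cc (x + s)).
  move=> /andP [js sl]; case: (j =P s) => [<- //|/eqP Djs].
  apply/negP => Es; have := lmin s; rewrite Es andbT.
  have -> : j < s by nlia.
  have -> : s <= k by nlia.
  move=> /(_ isT); nlia.
apply: (@fan_false (x + j - 2) (l - j + 3) m); [nlia | nlia | done | done | | | ].
- rewrite (_ : x + j - 2 + 1 = x + (j - 1)); last nlia.
  by apply: below; nlia.
- by rewrite (_ : x + j - 2 + (l - j + 3).-1 = x + l) //; nlia.
- move=> i /andP [i1 i2].
  rewrite (_ : x + j - 2 + i = x + (j - 2 + i)); last nlia.
  by apply: mid; nlia.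
Qed.

Lemma L1 x w y : e w (cc (x + 0)) -> ~~ e w (cc (x + 1)) -> ~~ e w (cc (x + 2)) ->
  e y w -> e y (cc (x + 2)) -> e y (cc (x + 0)).
Proof.
move=> E0 N1 N2 Eyw Ey2.
have D1 : cc (x + 1) != w by apply: (@neq_by (cc (x + 2))); cs.
have D2 : w != cc (x + 2) by apply: (@neq_by (cc (x + 0))); cs.
have D3 : y != cc (x + 0) by apply: (@neq_by (cc (x + 2))); cs.
have D4 : y != cc (x + 1) by apply: (@neq_by w); cs.
case Ey0: (e y (cc (x + 0))) => //; exfalso.
case Ey1: (e y (cc (x + 1))).
- apply: (noC4 (a:=w) (b:=cc (x+0)) (c:=cc (x+1)) (d:=y)); rewrite ?Ey0; cs.
- apply: (noC5 (a:=w) (b:=cc (x+0)) (c:=cc (x+1)) (d:=cc (x+2)) (f:=y));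
    rewrite ?Ey0 ?Ey1; cs.
Qed.

Lemma hubfind x w y2 y3 : e w (cc (x + 0)) -> ~~ e w (cc (x + 1)) -> ~~ e w (cc (x + 2)) ->
  ~~ e w (cc (x + 3)) ->
  e y2 w -> e y2 (cc (x + 2)) -> e y3 w -> e y3 (cc (x + 3)) ->
  (y2 != y3 -> e y2 y3) ->
  exists2 y, y \in [:: y2; y3] & e y (cc (x + 0)) && e y (cc (x + 3)).
Proof.
move=> E0 N1 N2 N3 E2w E22 E3w E33 K23.
have Y20 := L1 E0 N1 N2 E2w E22.
case E23: (e y2 (cc (x + 3))).
  by exists y2; rewrite ?inE ?eqxx ?Y20.
have D23 : y2 != y3 by rewrite eq_sym; apply: (@neq_by (cc (x + 3))); cs.
have E2_3 := K23 D23.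
have Y32 : e y3 (cc (x + 2)).
  rewrite e_sym; apply: (@c4_chord y2 _ (cc (x + 3))); try cs.
  - by first [apply: (@neq_by w); cs | rewrite eq_sym; apply: (@neq_by w); cs].
  - by first [apply: (@neq_by w); cs | rewrite eq_sym; apply: (@neq_by w); cs].
have Y30 := L1 E0 N1 N2 E3w Y32.
by exists y3; rewrite ?inE ?eqxx ?orbT ?Y30.
Qed.

Lemma hub_exists : exists2 h, h \in S & forall i, e h (cc i).
Proof.
have D : cc 0 != cc 3.
  by rewrite (_ : cc 0 = cc (0 + 0)) // (_ : cc 3 = cc (0 + 3)) // off_eq; lia.
have N : ~~ e (cc 0) (cc 3).
  by rewrite (_ : cc 0 = cc (0 + 0)) // (_ : cc 3 = cc (0 + 3)) // off_adj; lia.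
have [m mS /andP [E0 E3]] := CN (ccS 0) (ccS 3) D N.
exists m => //; apply: (@hub 0) => //; by rewrite e_sym.
Qed.

Lemma second_hub h : h \in S -> (forall i, e h (cc i)) ->
  exists y, [/\ y \in S, y != h & forall i, e y (cc i)].
Proof.
move=> hS Eh.
have [u uS /andP [Dhu Nhu]] := far hS.
have Duh : u != h by rewrite eq_sym.
have Nuh : ~~ e u h by rewrite e_sym.
have uC i : u != cc i by rewrite eq_sym; apply: (@neq_by h); rewrite // e_sym.
have F2 a b : e u (cc a) -> e u (cc b) -> cc a != cc b -> e (cc a) (cc b).
  by move=> Ea Eb Dab; move: (Eh a) (Eh b) => Ha Hb; apply: (@c4_chord u _ h); solve_e.
have Kc y z : e y u -> e y h -> e z u -> e z h -> y != z -> e y z.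
  by move=> ? ? ? ? ?; apply: (@c4_chord u _ h); solve_e.
have TCh i : ~~ e u (cc i) -> exists2 y, y \in S & [&& e y u, e y h & e y (cc i)].
  by move=> N; apply: TC; solve [done | exact: ccS | exact: uC | exact: Eh].
suff [x [y [yS Eyu Ey0 Ey3]]] : exists x y,
    [/\ y \in S, e y u, e y (cc (x + 0)) & e y (cc (x + 3))].
  exists y; split => //; last by apply: (@hub x) => //; rewrite cc0.
  by apply: (@neq_by u).
case: (pickP (fun i : 'I_k => e u (cc i))) => [i Ei | Hno].
- have caseA x : e u (cc (x + 0)) -> ~~ e u (cc (x + 1)) -> exists x y,
      [/\ y \in S, e y u, e y (cc (x + 0)) & e y (cc (x + 3))].
    move=> E0 N1.
    have N2 : ~~ e u (cc (x + 2)).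
      apply/negP => E2; have := F2 _ _ E0 E2; rewrite off_eq ?off_adj; nlia.
    have N3 : ~~ e u (cc (x + 3)).
      apply/negP => E3; have := F2 _ _ E0 E3; rewrite off_eq ?off_adj; nlia.
    have [y2 y2S /and3P [E2u E2h E22]] := TCh _ N2.
    have [y3 y3S /and3P [E3u E3h E33]] := TCh _ N3.
    have [y yin /andP [Y0 Y3]] := @hubfind x u y2 y3 E0 N1 N2 N3 E2u E22 E3u E33
       (Kc _ _ E2u E2h E3u E3h).
    exists x, y; split => //; move: yin; rewrite !inE => /orP [] /eqP -> //.
  case Ei1: (e u (cc (i + 1))).
  + apply: (caseA (i + 1)); first by rewrite addn0.
    apply/negP => E2; have := F2 _ _ Ei E2.
    rewrite [cc i]cc0 (_ : i + 1 + 1 = i + 2); last nlia.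
    rewrite off_eq ?off_adj; nlia.
  + by apply: (caseA i); rewrite ?addn0 ?Ei1.
- have Nu n : ~~ e u (cc n).
    have := Hno (Ordinal (ltn_pmod n kpos)); rewrite /= => /negbT.
    suff -> : cc (n %% k) = cc n by [].
    by apply/eqP; rewrite cc_eq modn_mod.
  have [y0 y0S /and3P [E0u E0h E00]] := TCh 0 (Nu 0).
  case: (boolP [exists t : 'I_k, ~~ e y0 (cc t)]) => [Hex | Hall]; last first.
    exists 0, y0; split => //; rewrite ?add0n //.
    move: Hall; rewrite negb_exists => /forallP /(_ (Ordinal (_ : 3 < k))) /negPn.
    by apply; nlia.
  have exP : exists t, (t < k) && ~~ e y0 (cc t).
    by case/existsP: Hex => t Ht; exists t; rewrite ltn_ord Ht.
  case: (ex_minnP exP) => j /andP [jk Nj] jmin.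
  have j0 : 0 < j by case: j jk Nj jmin => // _; rewrite E00.
  pose x := j.-1.
  have Y0 : e y0 (cc (x + 0)).
    apply/negPn/negP => N; have := jmin x; rewrite addn0 in N; rewrite N andbT.
    have -> : x < k by rewrite /x; nlia.
    move=> /(_ isT); rewrite /x; nlia.
  have N1 : ~~ e y0 (cc (x + 1)) by rewrite /x (_ : j.-1 + 1 = j) //; nlia.
  have N2 : ~~ e y0 (cc (x + 2)).
    apply/negP => E2; apply: (noC4 (a:=y0) (b:=cc (x+0)) (c:=cc (x+1)) (d:=cc (x+2)));
     try cs.
    by apply: (@neq_by u) => //; rewrite e_sym; apply: Nu.
  case Y3: (e y0 (cc (x + 3))); first by exists x, y0.
  have N3 : ~~ e y0 (cc (x + 3)) by rewrite Y3.
  have [y2 y2S /and3P [E2u E2h E22]] := TCh _ (Nu (x + 2)).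
  have [y3 y3S /and3P [E3u E3h E33]] := TCh _ (Nu (x + 3)).
  have E20 : e y2 y0 by apply: Kc => //; apply: (@neq_by (cc (x + 2))); solve_e.
  have E30 : e y3 y0 by apply: Kc => //; apply: (@neq_by (cc (x + 3))); solve_e.
  have [y yin /andP [Yy0 Yy3]] := @hubfind x y0 y2 y3 Y0 N1 N2 N3 E20 E22 E30 E33
     (Kc _ _ E2u E2h E3u E3h).
  exists x, y; split => //; move: yin; rewrite !inE => /orP [] /eqP -> //.
Qed.

Lemma cyc_result : has_K4 e /\ ~ wheels_uniquely_centered e.
Proof.
have [h hS Eh] := hub_exists.
have [y [yS Dyh Ey]] := second_hub hS Eh.
have cv (i : 'I_k) : cc i = v i.
  by rewrite /cc; congr v; apply: val_inj; rewrite /= modn_small.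
have Ehy : e h y.
  move: (Eh (0 + 0)) (Eh (0 + 2)) (Ey (0 + 0)) (Ey (0 + 2)) => H0 H2 Y0 Y2.
  by apply: (@c4_chord (cc (0 + 0)) _ (cc (0 + 2))); cs.
split.
- exists h, y, (cc 0), (cc 1).
  move: (Eh 0) (Eh 1) (Ey 0) (Ey 1) (a01 0) => H0 H1 Y0 Y1 A01.
  split; last by split; split.
  rewrite /= !inE !negb_or eq_sym Dyh !edge_neq //.
- move=> Hw.
  have W x : (forall i, e x (cc i)) -> induced_wheel e v x.
    move=> Ex; split => //; first exact: (leq_trans _ k6).
    split; first by split.
    split=> i; rewrite -cv; last exact: Ex.
    by rewrite eq_sym; apply: edge_neq.
  apply: (Hw k v h (W h Eh)).
  exists y; split; first by apply/eqP.
  exact: W.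
Qed.
End Cyc.

Lemma noind4 (w : 'I_4 -> T) : injective w -> (forall i j, e (w i) (w j) = cyc_adj 4 i j) -> False.
Proof.
move=> winj wadj.
pose o0 := @Ordinal 4 0 isT; pose o1 := @Ordinal 4 1 isT;
pose o2 := @Ordinal 4 2 isT; pose o3 := @Ordinal 4 3 isT.
apply: (noC4 (a:=w o0) (b:=w o1) (c:=w o2) (d:=w o3)); rewrite ?wadj //;
  by apply/eqP => /winj /(congr1 val).
Qed.

Lemma noind5 (w : 'I_5 -> T) : injective w -> (forall i j, e (w i) (w j) = cyc_adj 5 i j) -> False.
Proof.
move=> winj wadj.
pose o0 := @Ordinal 5 0 isT; pose o1 := @Ordinal 5 1 isT;
pose o2 := @Ordinal 5 2 isT; pose o3 := @Ordinal 5 3 isT; pose o4 := @Ordinal 5 4 isT.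
apply: (noC5 (a:=w o0) (b:=w o1) (c:=w o2) (d:=w o3) (f:=w o4)); rewrite ?wadj //;
  by apply/eqP => /winj /(congr1 val).
Qed.

Lemma ind_conv k (w : 'I_k -> T) : 3 < k -> induced_cycle (induced e S) w ->
  (forall i, w i \in S) /\ induced_cycle e w.
Proof.
move=> k3 [winj wadj].
have kp : 0 < k by exact: (leq_trans _ k3).
have wS i : w i \in S.
  have := wadj i (Ordinal (ltn_pmod i.+1 kp)).
  rewrite /cyc_adj /= eqxx /= /induced /= => /and3P [] //.
split => //; split => // i j; by rewrite -wadj /induced /= !wS.
Qed.

Lemma cyc_main k (w : 'I_k -> T) : 3 < k -> induced_cycle (induced e S) w ->
  has_K4 e /\ ~ wheels_uniquely_centered e.
Proof.
elim/ltn_ind: k w => k IH w k3 Hw.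
have [wS [winj wadj]] := ind_conv k3 Hw.
case: (classic (exists n (w' : 'I_n -> T), [/\ 3 < n, n < k & induced_cycle (induced e S) w'])).
  by case=> n [w' [n3 nk Hw']]; exact: (IH n nk w' n3 Hw').
move=> Hmin.
have k6 : 5 < k.
  case: k IH w k3 Hw wS winj wadj Hmin => [|[|[|[|[|[|k]]]]]] // IH w _ _ _ winj wadj _.
  - by exfalso; exact: (noind4 winj wadj).
  - by exfalso; exact: (noind5 winj wadj).
apply: (@cyc_result k w k6 wS winj wadj).
by move=> n w' n3 nk Hw'; apply: Hmin; exists n, w'.
Qed.
End Basics.

Theorem mainTheorem12 (T : finType) (e : rel T)
    (e_sym : symmetric e) (e_irr : irreflexive e) :
  bridged e ->
  (chordal e \/ ~ has_induced_3sun e \/ wheels_uniquely_centered e \/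
   ~ has_K4 e) ->
  nicely_bridged e.
Proof.
move=> hbr H; split => // S _ H2 k w k3 Hw.
have [wS [winj wadj]] := ind_conv k3 Hw.
have kp : 0 < k by exact: (leq_trans _ k3).
case: H => [Hch | [Hsun | [Hwh | HK4]]].
- exact: (Hch k w k3).
- by apply: Hsun; apply: (sun e_sym e_irr hbr H2 (wS (Ordinal kp))).
- by have [_ ] := cyc_main e_sym e_irr hbr H2 k3 Hw.
- by have [] := cyc_main e_sym e_irr hbr H2 k3 Hw.
Qed.
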